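(* Let $K_n$ be the complete graph on $n$ vertices and let $k$ be a positive integer with $k\leq n-1$. Then $\gamma_{gr}^{k}(K_n)=k$, $\gamma_{gr}^{L,k}(K_n)=k+1$, $\gamma_{gr}^{Z,k}(K_n)=k$, and $\gamma_{gr}^{t,k}(K_n)=k+1$.
   Context: For a vertex $v$, $N(v)$ is its open neighborhood and $N[v]=N(v)\cup\{v\}$. A sequence $S=(v_1,\ldots,v_m)$ of distinct vertices is a $k$-sequence (resp. $k$-$L$-sequence, $k$-$Z$-sequence, $k$-$t$-sequence) if for each $i\in[m]$ there is a vertex $u_i$ with $u_i\in N[v_i]$ (resp. $N[v_i]$, $N(v_i)$, $N(v_i)$) such that the number of indices $j<i$ with $u_i\in N[v_j]$ (resp. $N(v_j)$, $N[v_j]$, $N(v_j)$) is less than $k$. The numbers $\gamma_{gr}^{k}(G)$, $\gamma_{gr}^{L,k}(G)$, $\gamma_{gr}^{Z,k}(G)$, $\gamma_{gr}^{t,k}(G)$ are the maximum lengths of such sequences, respectively. *)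

(* Defs.v *)
From mathcomp Require Import all_boot.
Set Implicit Arguments. Unset Strict Implicit. Unset Printing Implicit Defensive.

(* A simple graph on a finite vertex type T is given by an adjacency relation
   e : rel T (assumed symmetric and irreflexive where relevant). *)

Definition openN (T : finType) (e : rel T) (v : T) : {set T} := [set u | e v u].
Definition closedN (T : finType) (e : rel T) (v : T) : {set T} := v |: openN e v.

Definition gr_seq (T : finType) (A B : T -> {set T}) (k m : nat)
    (t : m.-tuple T) : bool :=
  uniq t &&
  [forall i : 'I_m, [exists u : T,
     (u \in A (tnth t i)) &&
     (#|[set j : 'I_m | (j < i) && (u \in B (tnth t j))]| < k)]].

(* maximum length of such a sequence (distinctness bounds lengths by #|T|) *)
Definition gamma_gen (T : finType) (A B : T -> {set T}) (k : nat) : nat :=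
  \max_(m < #|T|.+1 | [exists t : m.-tuple T, gr_seq A B k t]) m.

Definition gamma_gr (T : finType) (e : rel T) (k : nat) : nat :=
  gamma_gen (closedN e) (closedN e) k.
Definition gamma_grL (T : finType) (e : rel T) (k : nat) : nat :=
  gamma_gen (closedN e) (openN e) k.
Definition gamma_grZ (T : finType) (e : rel T) (k : nat) : nat :=
  gamma_gen (openN e) (closedN e) k.
Definition gamma_grt (T : finType) (e : rel T) (k : nat) : nat :=
  gamma_gen (openN e) (openN e) k.

Definition Kn (n : nat) : rel 'I_n := fun x y => x != y.
Arguments Kn n : clear implicits.

(* Main.v *)
Require Import Defs.
From mathcomp Require Import all_boot.
From mathcomp Require Import zify.

Lemma card_lt (m i : nat) : i <= m -> #|[set j : 'I_m | j < i]| = i.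
Proof.
move=> H.
have -> : [set j : 'I_m | j < i] = widen_ord H @: [set: 'I_i].
  apply/setP => j; rewrite inE; apply/idP/imsetP.
    by move=> hj; exists (Ordinal hj) => //; apply: val_inj.
  by case=> x _ ->; rewrite /= ltn_ord.
rewrite card_imset ?cardsT ?card_ord //.
by move=> x y /(congr1 val) /= /val_inj.
Qed.

Lemma card_le_i (m : nat) (i : 'I_m) (P : pred 'I_m) :
  #|[set j : 'I_m | (j < i) && P j]| <= i.
Proof.
rewrite -{2}(@card_lt m i (ltnW (ltn_ord i))).
by apply: subset_leq_card; apply/subsetP => j; rewrite !inE => /andP[].
Qed.

Lemma card_lt_i (m : nat) (i : 'I_m) (P : pred 'I_m) (j0 : 'I_m) :
  j0 < i -> ~~ P j0 -> #|[set j : 'I_m | (j < i) && P j]| < i.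
Proof.
move=> h0 hP.
rewrite -{2}(@card_lt m i (ltnW (ltn_ord i))).
apply: proper_card; apply/properP; split.
  by apply/subsetP => j; rewrite !inE => /andP[].
by exists j0; rewrite !inE ?h0 // (negbTE hP) andbF.
Qed.

Arguments card_le_i {m i P}.
Arguments card_lt_i {m i P j0}.

Lemma gamma_gen_eq (T : finType) A B k b :
  b <= #|T| -> (exists t : b.-tuple T, gr_seq A B k t) ->
  (forall m (t : m.-tuple T), gr_seq A B k t -> m <= b) -> gamma_gen A B k = b.
Proof.
move=> hb [t0 ht0] hub; apply/eqP; rewrite eqn_leq; apply/andP; split.
  by apply/bigmax_leqP => i /existsP [t ht]; exact: hub _ t ht.
have hb' : b < #|T|.+1 by [].
have := @leq_bigmax_cond _ (fun m : 'I_#|T|.+1 => [exists t : m.-tuple T, gr_seq A B k t])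
  (fun m => nat_of_ord m) (Ordinal hb').
apply; apply/existsP; by exists t0.
Qed.

Lemma inKc n (u v : 'I_n) : u \in closedN (Kn n) v.
Proof. by rewrite /closedN !inE /Kn eq_sym orbN. Qed.

Lemma inKo n (u v : 'I_n) : (u \in openN (Kn n) v) = (v != u).
Proof. by rewrite inE. Qed.

Lemma ub_closed n k A m (t : m.-tuple 'I_n) :
  gr_seq A (closedN (Kn n)) k t -> m <= k.
Proof.
move=> /andP [_ /forallP H]; rewrite leqNgt; apply/negP => hkm.
have [u /andP [_]] := existsP (H (Ordinal hkm)).
have -> : [set j : 'I_m | (j < Ordinal hkm) && (u \in closedN (Kn n) (tnth t j))]
   = [set j : 'I_m | j < k].
  by apply/setP => j; rewrite !inE; have := @inKc n u (tnth t j); rewrite /closedN !inE => ->; rewrite andbT.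
by rewrite card_lt ?ltnn // ltnW.
Qed.

Lemma ub_open n k A m (t : m.-tuple 'I_n) :
  gr_seq A (openN (Kn n)) k t -> m <= k.+1.
Proof.
move=> /andP [/tuple_uniqP inj /forallP H]; rewrite leqNgt; apply/negP => hkm.
have [u /andP [_]] := existsP (H (Ordinal hkm)).
set S := [set j : 'I_m | _].
have hsub : [set j : 'I_m | j < k.+1] \subset S :|: [set j | tnth t j == u].
  apply/subsetP => j; rewrite inE => hj; rewrite in_setU.
  case E: (tnth t j == u); first by rewrite inE E orbT.
  by apply/orP; left; rewrite /S inE /= hj /= inE /Kn E.
have h1 : #|[set j | tnth t j == u]| <= 1.
  case: (pickP [pred j | tnth t j == u]) => [j0 hj0 | h0].
    rewrite -(cards1 j0); apply: subset_leq_card; apply/subsetP => j.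
    rewrite !inE => /eqP hj; apply/eqP; apply: inj; rewrite hj; exact/esym/eqP.
  suff -> : [set j | tnth t j == u] = set0 by rewrite cards0.
  by apply/setP => j; rewrite !inE; apply/negbTE/negP => hj; move: (h0 j); rewrite /= hj.
have := subset_leq_card hsub; rewrite (@card_lt m k.+1 (ltnW hkm)) => h2 h4.
have h3 := leq_trans h2 (leq_card_setU _ _).
have := leq_trans h3 (leq_add (leqnn #|S|) h1).
by rewrite addn1 ltnS leqNgt h4.
Qed.


Lemma tup_ok n b (hbn : b <= n) :
  uniq [tuple widen_ord hbn j | j < b].
Proof.
apply/tuple_uniqP => i j; rewrite !tnth_mktuple => /(congr1 val) /= /val_inj //.
Qed.

Theorem mainTheorem6 (n k : nat) (hk : 0 < k) (hkn : k <= n - 1) :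
  [/\ gamma_gr (Kn n) k = k, gamma_grL (Kn n) k = k.+1,
      gamma_grZ (Kn n) k = k & gamma_grt (Kn n) k = k.+1].
Proof.
have hk1n : k.+1 <= n by lia.
have hkn' : k <= n by apply: ltnW.
have cardn : #|'I_n| = n by rewrite card_ord.
have hn1 : n.-1 < n by lia.
have h01 : 0 < k.+1 by [].
have h11 : 1 < k.+1 by [].
split.
- apply: gamma_gen_eq; first by rewrite cardn.
    exists [tuple widen_ord hkn' j | j < k]; rewrite /gr_seq tup_ok /=.
    apply/forallP => i; apply/existsP; exists (tnth [tuple widen_ord hkn' j | j < k] i).
    by rewrite inKc /= (leq_ltn_trans (card_le_i)).
  by move=> m t; apply: ub_closed.
- apply: gamma_gen_eq; first by rewrite cardn.
    set t := [tuple widen_ord hk1n j | j < k.+1].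
    exists t; rewrite /gr_seq tup_ok /=.
    apply/forallP => i; apply/existsP; exists (tnth t (Ordinal h01)).
    rewrite inKc /=.
    case: (posnP i) => hi.
      by apply: (leq_ltn_trans (card_le_i)); rewrite hi.
    apply: (leq_trans (card_lt_i (j0 := Ordinal h01) _ _)) => //.
      by rewrite inKo eqxx.
    by rewrite -ltnS ltn_ord.
  by move=> m t; apply: ub_open.
- apply: gamma_gen_eq; first by rewrite cardn.
    exists [tuple widen_ord hkn' j | j < k]; rewrite /gr_seq tup_ok /=.
    apply/forallP => i; apply/existsP; exists (Ordinal hn1).
    rewrite inKo tnth_mktuple /= (leq_ltn_trans (card_le_i)) // andbT.
    apply/eqP => /(congr1 val) /= hi.
    have := ltn_ord i; rewrite hi; move: hkn; rewrite subn1 => a b.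
    by have := leq_trans b a; rewrite ltnn.
  by move=> m t; apply: ub_closed.
- apply: gamma_gen_eq; first by rewrite cardn.
    set t := [tuple widen_ord hk1n j | j < k.+1].
    exists t; rewrite /gr_seq tup_ok /=.
    apply/forallP => i; apply/existsP.
    case: (posnP i) => hi.
      exists (tnth t (Ordinal h11)).
      rewrite inKo !tnth_mktuple /= (leq_ltn_trans (card_le_i)) ?hi // andbT.
      by apply/eqP => /(congr1 val) /=; rewrite hi.
    exists (tnth t (Ordinal h01)).
    rewrite inKo !tnth_mktuple /=.
    apply/andP; split.
      by apply/eqP => /(congr1 val) /= h; rewrite h in hi.
    apply: (leq_trans (card_lt_i (j0 := Ordinal h01) _ _)) => //.
      by rewrite inKo tnth_mktuple eqxx.
    by rewrite -ltnS ltn_ord.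
  by move=> m t; apply: ub_open.
Qed.
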